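(* Let $\lambda\in(0,1)$, $X=[0,1]^2$, $X_1=\{(x,y)\in X:y<x^2\}$, $X_2=\{(x,y)\in X:y>x^2\}$, $f_1(x,y)=\lambda(x,y)$ and $f_2(x,y)=(1-\lambda x,\lambda y)$. Let $f:X\to X$ be any map with $f|_{X_i}=f_i$ for $i=1,2$. Then $L=\overline{\{(\lambda^n,0):n\in\mathbb N\}}=\Lambda$, and the attractor is transitive.
   Context: Here $\Delta:=X\setminus(X_1\cup X_2)=\{y=x^2\}$ and $\tilde X:=\bigcap_{n\ge0}f^{-n}(X\setminus\Delta)$. For $x\in\tilde X$, $\omega(x)$ is the set of limits of $f^{n_k}(x)$ along divergent sequences $(n_k)$; the limit set is $L:=\overline{\bigcup_{x\in\tilde X}\omega(x)}$. With $F_i(A):=\overline{f(A\cap X_i)}$, atoms of generation $n$ are the sets $F_{i_n}\circ\cdots\circ F_{i_1}(X)$, $\Lambda_n$ is their union, and the attractor is $\Lambda:=\bigcap_{n\ge1}\Lambda_n$. A compact set $Y$ is transitive if $Y=\omega(x)$ for some $x\in\tilde X$. *)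

(* Defs.v *)
From HB Require Import structures.
From mathcomp Require Import all_boot all_order all_algebra.
From mathcomp Require Import all_classical all_reals all_analysis.
Set Implicit Arguments. Unset Strict Implicit. Unset Printing Implicit Defensive.
Import Order.TTheory GRing.Theory Num.Theory.
Import numFieldNormedType.Exports.
Local Open Scope classical_set_scope.
Local Open Scope ring_scope.

Section Defs.
Variable R : realType.
Notation pt := (R * R)%type.

Definition Xsq : set pt := [set p | 0 <= p.1 <= 1 /\ 0 <= p.2 <= 1].
Definition X1 : set pt := [set p | Xsq p /\ p.2 < p.1 ^+ 2].
Definition X2 : set pt := [set p | Xsq p /\ p.2 > p.1 ^+ 2].
Definition Delta : set pt := Xsq `\` (X1 `|` X2).

Definition f1 (lam : R) (p : pt) : pt := (lam * p.1, lam * p.2).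
Definition f2 (lam : R) (p : pt) : pt := (1 - lam * p.1, lam * p.2).

Definition Xtilde (f : pt -> pt) : set pt :=
  [set x | Xsq x /\ forall n : nat, (Xsq `\` Delta) (iter n f x)].

Definition omega (f : pt -> pt) (x : pt) : set pt :=
  [set p : pt | exists nk : nat -> nat,
      (forall M : nat, exists K : nat, forall k : nat, (K <= k)%N -> (M <= nk k)%N)
      /\ (fun k => iter (nk k) f x) @ \oo --> p].

Definition limset (f : pt -> pt) : set pt :=
  closure (\bigcup_(x in Xtilde f) omega f x).

Inductive piece := P1 | P2.
Definition Xi (i : piece) : set pt := match i with P1 => X1 | P2 => X2 end.

Definition Fmap (f : pt -> pt) (i : piece) (A : set pt) : set pt :=
  closure (f @` (A `&` Xi i)).

(* atom F_{i_n} o ... o F_{i_1} (X) for the word w = [:: i_n; ...; i_1] *)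
Definition atom (f : pt -> pt) (w : seq piece) : set pt :=
  foldr (Fmap f) Xsq w.

Definition Lambda_n (f : pt -> pt) (n : nat) : set pt :=
  [set p | exists w : seq piece, size w = n /\ atom f w p].

Definition attractor (f : pt -> pt) : set pt :=
  \bigcap_(n in [set n : nat | (1 <= n)%N]) Lambda_n f n.

Definition transitive_set (f : pt -> pt) (Y : set pt) : Prop :=
  compact Y /\ exists x, Xtilde f x /\ omega f x = Y.

End Defs.

(* Main.v *)
Require Import Defs.
From HB Require Import structures.
From mathcomp Require Import all_boot all_order all_algebra.
From mathcomp Require Import all_classical all_reals all_analysis.
From mathcomp Require Import ring lra.
Import Order.TTheory GRing.Theory Num.Theory.
Import numFieldNormedType.Exports.
Local Open Scope classical_set_scope.
Local Open Scope ring_scope.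
From mathcomp Require Import ring lra.

Section Gen.
Variable R : realType.

Definition close (p q : R*R) e := `|p.1 - q.1| < e /\ `|p.2 - q.2| < e.

Lemma ballE2 (p q : R*R) e : ball p e q <-> close p q e.
Proof. by []. Qed.

Lemma powsmall (l d : R) : 0 <= l < 1 -> 0 < d -> exists N, l ^+ N < d.
Proof.
move=> /andP[l0 l1] d0.
have : (fun n => l ^+ n) @ \oo --> (0:R) by apply: cvg_expr; rewrite ger0_norm.
move=> /cvgrPdist_lt /(_ d d0) [N _ HN].
exists N; have := HN N (leqnn N). by rewrite sub0r normrN ger0_norm // exprn_ge0.
Qed.

Lemma powmono (l : R) m n : 0 <= l <= 1 -> (m <= n)%N -> l ^+ n <= l ^+ m.
Proof. move=> /andP[l0 l1] mn. by rewrite ler_wiXn2l. Qed.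

Lemma omegaP f x p : omega f x p <->
  forall e, 0 < e -> forall M, exists n, (M <= n)%N /\ close (iter n f x) p e.
Proof.
split.
  move=> [nk [div cv]] e e0 M.
  have [K HK] := div M.
  move: cv => /cvg_ballP /(_ e e0) [K' _ HK'].
  exists (nk (maxn K K')); split; first by apply: HK; rewrite leq_maxl.
  have := HK' (maxn K K') (leq_maxr _ _).
  move/ballE2 => [h1 h2]; split; by rewrite distrC.
move=> H.
have /choice [nk Hnk] : forall k : nat, exists n, (k <= n)%N /\
   close (iter n f x) p ((2^-1 : R) ^+ k).
  move=> k; apply: H; apply: exprn_gt0; lra.
exists nk; split.
  by move=> M; exists M => k Mk; apply: leq_trans Mk (Hnk k).1.
apply/cvg_ballP => e e0.
have [N HN] := @powsmall (2^-1) e ltac:(apply/andP; split; lra) e0.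
exists N => // k /= Nk.
have [_ [c1 c2]] := Hnk k.
have hk : (2^-1 : R) ^+ k <= 2^-1 ^+ N by apply: powmono => //; apply/andP; split; lra.
apply/ballE2; split; rewrite distrC; lra.
Qed.
Lemma closureP2 (A : set (R*R)) p : closure A p <-> forall e, 0 < e -> exists q, A q /\ close p q e.
Proof.
split.
  move=> cl e e0. have := cl (ball p e) (nbhsx_ballx _ _ e0).
  by move=> [q [Aq bq]]; exists q; split => //; apply/ballE2.
move=> H B /nbhs_ballP [e /= e0 sB].
have [q [Aq cq]] := H e e0. exists q; split => //. apply: sB. exact/ballE2.
Qed.
End Gen.
Lemma not_covered (R : realType) (h : seq bool -> R) :
  exists a : R, 0 <= a <= 1 /\ forall w, a <> h w.
Proof.
apply: contrapT => H.
have sub : `[(0:R), 1] `<=` range h.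
  move=> a /=; rewrite in_itv /= => a01.
  apply: contrapT => na; apply: H; exists a; split => // w aw.
  by apply: na; exists w.
have c : countable (range h).
  apply: sub_countable (card_image_le _ _) _; exact: countableP.
have c2 : countable `[(0:R), 1] by apply: sub_countable (subset_card_le sub) c.
have := countable_lebesgue_measure0 c2.
rewrite lebesgue_measure_itv /= lte_fin ltr01 /=.
by move=> /eqP; rewrite -EFinD subr0 eqe oner_eq0.
Qed.
Section Dyn.
Variables (R : realType) (lam : R) (f : R * R -> R * R).
Hypothesis hl : 0 < lam < 1.
Hypothesis hX : forall p, Xsq p -> Xsq (f p).
Hypothesis h1 : forall p, X1 p -> f p = f1 lam p.
Hypothesis h2 : forall p, X2 p -> f p = f2 lam p.

Definition good (p : R * R) := X1 p \/ X2 p.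

Lemma goodE (p : R * R) : (@Xsq R `\` @Delta R) p <-> good p.
Proof.
rewrite /Delta /good; split.
  move=> [Xp nD]; apply: contrapT => ng; apply: nD; split => // -[]//.
move=> gp; have Xp : Xsq p by case: gp => -[].
by split => // -[_]; apply.
Qed.

Lemma goodX {p : R * R} : good p -> Xsq p.
Proof. by case=> -[]. Qed.

Lemma Xt_good {x} n : Xtilde f x -> good (iter n f x).
Proof. by move=> [_ H]; apply/goodE. Qed.

Lemma l0 : 0 < lam. Proof. by case/andP: hl. Qed.
Lemma l1 : lam < 1. Proof. by case/andP: hl. Qed.

Lemma Xt_y {x} n : Xtilde f x -> (iter n f x).2 = lam ^+ n * x.2.
Proof.
move=> Xx; elim: n => [|n IH]; first by rewrite expr0 mul1r.
rewrite iterS; case: (@Xt_good x n Xx) => [/h1|/h2] ->; by rewrite /= IH exprS mulrA.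
Qed.

Definition gs (n : nat) : R * R := (lam ^+ n, 0).

Lemma powsmall' (d : R) : 0 < d -> exists N, forall n, (N <= n)%N -> lam ^+ n < d.
Proof.
move=> d0; have [N HN] := @powsmall R lam d ltac:(apply/andP; split; [exact: ltW l0|exact: l1]) d0.
exists N => n Nn; apply: le_lt_trans HN; apply: powmono => //.
by apply/andP; split; [exact: ltW l0|exact: ltW l1].
Qed.

Lemma Xsq01 {p : R * R} : Xsq p -> (0 <= p.1 <= 1) /\ (0 <= p.2 <= 1).
Proof. by []. Qed.

Lemma partA x p : Xtilde f x -> omega f x p -> closure (range gs) p.
Proof.
move=> Xx /omegaP Hom; apply/closureP2 => e e0.
pose e3 := e / 3.
have e30 : 0 < e3 by rewrite /e3; lra.
have [N HN] := powsmall' _ (mulr_gt0 e30 e30).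
have [N' HN'] := powsmall' _ e30.
pose N0 := maxn N N'.
have lp := l0; have lq := l1.
have [/andP[x10 x11] /andP[x20 x21]] := Xsq01 Xx.1.
have Q : forall j, exists k, `|(iter (N0 + j) f x).1 - lam ^+ k| <= e3 + lam ^+ j.
  elim => [|j [k IH]].
    exists 0%N; rewrite addn0 expr0.
    have [/andP[a b] _] := Xsq01 (goodX (Xt_good N0 Xx)).
    rewrite ler_norml; apply/andP; split; lra.
  rewrite addnS iterS.
  set q := iter (N0 + j) f x.
  have yq : q.2 = lam ^+ (N0 + j) * x.2 := Xt_y _ Xx.
  have [/andP[q10 q11] /andP[q20 q21]] := Xsq01 (goodX (Xt_good (N0 + j) Xx)).
  have pj0 : 0 <= lam ^+ j by apply: exprn_ge0; lra.
  have pN0 : 0 <= lam ^+ (N0 + j) by apply: exprn_ge0; lra.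
  have pNs : lam ^+ (N0 + j) < e3 * e3.
    by apply: HN; apply: leq_trans (leq_maxl N N') (leq_addr _ _).
  have small : q.2 < e3 * e3 by rewrite yq; nra.
  case: (Xt_good (N0 + j) Xx) => [X1q|X2q].
    rewrite h1 //; exists k.+1.
    rewrite /= exprS -mulrBr normrM (ger0_norm (ltW lp)) exprS.
    move: IH; set d := `|_|; move=> IH; nra.
  rewrite h2 //; exists 0%N.
  have q1s : q.1 < e3 by case: X2q => _ /= H; nra.
  rewrite /= expr0 exprS.
  have -> : 1 - lam * q.1 - 1 = - (lam * q.1) by ring.
  rewrite normrN ger0_norm; nra.
have [J HJ] := powsmall' _ e30.
have [n [Mn [c1 c2]]] := Hom e3 e30 (N0 + J)%N.
have N0n : (N0 <= n)%N by apply: leq_trans Mn; apply: leq_addr.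
have [k Hk] := Q (n - N0)%N.
rewrite subnKC // in Hk.
have hJ : lam ^+ (n - N0) < e3 by apply: HJ; rewrite leq_subRL.
have yn : (iter n f x).2 = lam ^+ n * x.2 := Xt_y _ Xx.
have pn0 : 0 <= lam ^+ n by apply: exprn_ge0; lra.
have pns : lam ^+ n < e3 by apply: HN'; apply: leq_trans N0n; apply: leq_maxr.
exists (gs k); split; first by exists k.
move: c1 c2 Hk; rewrite /close /gs /= !ltr_norml ler_norml subr0 yn.
move=> /andP[a1 a2] /andP[b1 b2] /andP[d1 d2].
split; apply/andP; split; rewrite /e3 in a1 a2 b1 b2 d1 d2 hJ pns *; nra.
Qed.

Lemma le_eps (a b : R) : (forall e, 0 < e -> a < b + e) -> a <= b.
Proof.
move=> H; rewrite leNgt; apply/negP => ba.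
have := H (a - b) ltac:(lra); lra.
Qed.

Lemma sep m m' : (m < m')%N -> lam ^+ m * (1 - lam) <= lam ^+ m - lam ^+ m'.
Proof.
move=> mm'.
have : lam ^+ m' <= lam ^+ m.+1.
  by apply: powmono => //; apply/andP; split; [exact: ltW l0|exact: ltW l1].
rewrite exprS => H.
have p0 : 0 <= lam ^+ m by apply: exprn_ge0; exact: ltW l0.
nra.
Qed.

Lemma Sdesc p : closure (range gs) p -> p = (0, 0) \/ exists m, p = gs m.
Proof.
move/closureP2 => H.
have y0 : p.2 = 0.
  apply/eqP; rewrite -normr_le0; apply: le_eps => e e0.
  have [q [[k _ <-] [_ c2]]] := H e e0.
  by move: c2; rewrite /gs /= subr0 add0r.
case: p H y0 => a b H /= ->.
have [->|an0] := eqVneq a 0; first by left.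
right.
have lp := l0; have lq := l1.
have aa : 0 < `|a| by rewrite normr_gt0.
pose e0 := `|a| * (1 - lam) / 4.
have e00 : 0 < e0 by rewrite /e0; apply: divr_gt0 => //; apply: mulr_gt0 => //; lra.
have [q [[m _ <-] [c1 _]]] := H e0 e00.
exists m; move: c1; rewrite /gs /= => c1.
have near m' : `|a - lam ^+ m'| < e0 -> m' = m.
  move=> c2; apply/eqP; apply: contraT => nm.
  have pm : 0 <= lam ^+ m by apply: exprn_ge0; lra.
  have pm' : 0 <= lam ^+ m' by apply: exprn_ge0; lra.
  have : `|a| <= `|a - lam ^+ m| + lam ^+ m.
    by rewrite -{2}(ger0_norm pm); apply: (le_trans _ (ler_normD _ _)); rewrite subrK.
  have : `|a| <= `|a - lam ^+ m'| + lam ^+ m'.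
    by rewrite -{2}(ger0_norm pm'); apply: (le_trans _ (ler_normD _ _)); rewrite subrK.
  move=> h1' h2'.
  have hm : `|a| - e0 < lam ^+ m by lra.
  have hm' : `|a| - e0 < lam ^+ m' by lra.
  move: c1 c2; rewrite !ltr_norml => /andP[c1 c1'] /andP[c2 c2'].
  have ea : e0 * 4 = `|a| * (1 - lam) by rewrite /e0; field.
  have [mm'|m'm] : (m < m')%N \/ (m' < m)%N.
    by move: nm; rewrite neq_ltn => /orP[]; [right|left].
  - have := sep _ _ mm'. have X : (`|a| - e0) * (1 - lam) < lam ^+ m * (1 - lam) by rewrite ltr_pM2r //; lra.
    have : 0 < e0 * lam by apply: mulr_gt0.
    move=> *; clearbody e0; lra.
  - have := sep _ _ m'm. have X : (`|a| - e0) * (1 - lam) < lam ^+ m' * (1 - lam) by rewrite ltr_pM2r //; lra.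
    have : 0 < e0 * lam by apply: mulr_gt0.
    move=> *; clearbody e0; lra.
congr pair.
apply/eqP; rewrite -subr_eq0 -normr_le0; apply: le_eps => e e0'.
rewrite add0r.
have [q2 [[m' _ <-] [c2 _]]] := H (Num.min e e0) ltac:(by rewrite lt_min e0' e00).
move: c2; rewrite /gs /= lt_min => /andP[c2 c3].
by rewrite -(near m' c3).
Qed.

Lemma S0 : closure (range gs) (0, 0).
Proof.
apply/closureP2 => e e0.
have [N HN] := powsmall' _ e0.
exists (gs N); split; first by exists N.
rewrite /close /gs /= !add0r !normrN normr0 e0 ger0_norm; last by apply: exprn_ge0; exact: ltW l0.
by split => //; apply: HN.
Qed.

Lemma Sg m : closure (range gs) (gs m).
Proof. by apply: subset_closure; exists m. Qed.

Definition mu : R := Num.sqrt lam.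
Lemma mu0 : 0 < mu. Proof. by rewrite /mu sqrtr_gt0 l0. Qed.
Lemma mu2 : mu ^+ 2 = lam. Proof. by rewrite /mu sqr_sqrtr // ltW // l0. Qed.
Lemma mu1 : mu < 1.
Proof. have := mu2; have := mu0; have := l1; rewrite expr2 => *; nra. Qed.
Lemma lmu : lam <= mu.
Proof. have := mu2; have := mu0; have := mu1; rewrite expr2 => *; nra. Qed.
Lemma mupow n : (mu ^+ n) ^+ 2 = lam ^+ n.
Proof. by rewrite exprAC mu2. Qed.

Definition Inv n (p : R * R) := forall e, 0 < e ->
  (exists k, `|p.1 - lam ^+ k| < mu ^+ n + e) /\ p.2 < lam ^+ n + e /\ - e < p.2.

Lemma Inv_atom w p : atom f w p -> Inv (size w) p.
Proof.
have lp := l0; have lq := l1; have m0 := mu0; have m1 := mu1; have lm := lmu.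
elim: w p => [|i w IH] p.
  move=> /Xsq01 [/andP[a b] /andP[c d]] e e0; split; [exists 0%N|split].
  - rewrite /= !expr0 ltr_norml; apply/andP; split; lra.
  - rewrite expr0; lra.
  - lra.
move=> /closureP2 Hc e e0.
have e20 : 0 < e / 2 by lra.
have [q' [[q [Aq Xiq] <-] [c1 c2]]] := Hc (e / 2) e20.
have IHq := IH q Aq.
have q2le : q.2 <= lam ^+ size w.
  by apply: le_eps => e' e'0; have [_ []] := IHq e' e'0.
have pm : 0 <= mu ^+ size w by apply: exprn_ge0; lra.
have pl : 0 <= lam ^+ size w by apply: exprn_ge0; lra.
rewrite /= !exprS.
clear Hc; case: i Xiq => Xiq /=.
- rewrite h1 // /f1 /= in c1 c2.
  have [/andP[q10 q11] /andP[q20 q21]] := Xsq01 (Xiq.1).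
  have [k Hk] := (IHq (e / 2) e20).1.
  split; [exists k.+1|split].
  + rewrite exprS.
    have : `|lam * q.1 - lam * lam ^+ k| < mu * mu ^+ size w + e / 2.
      rewrite -mulrBr normrM (ger0_norm (ltW lp)).
      move: Hk; set d := `|_|; move=> Hk.
      have : 0 <= d by rewrite /d.
      nra.
    move=> c3.
    have := ler_normD (p.1 - lam * q.1) (lam * q.1 - lam * lam ^+ k).
    rewrite addrA subrK; lra.
  + move: c2; rewrite ltr_norml => /andP[c c']; nra.
  + move: c2; rewrite ltr_norml => /andP[c c']; nra.
- rewrite h2 // /f2 /= in c1 c2.
  have [/andP[q10 q11] /andP[q20 q21]] := Xsq01 (Xiq.1).
  have q1s : q.1 < mu ^+ size w.
    have := Xiq.2; have := mupow (size w); rewrite !expr2 /= => hh X.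
    nra.
  split; [exists 0%N|split].
  + rewrite expr0; move: c1; rewrite !ltr_norml => /andP[c c']; apply/andP; split; nra.
  + move: c2; rewrite ltr_norml => /andP[c c']; nra.
  + move: c2; rewrite ltr_norml => /andP[c c']; nra.
Qed.

Lemma attr_sub p : attractor f p -> closure (range gs) p.
Proof.
move=> Ap; apply/closureP2 => e e0.
have e20 : 0 < e / 2 by lra.
have [N1 HN1] := @powsmall R mu (e / 2) ltac:(apply/andP; split; [exact: ltW mu0|exact: mu1]) e20.
have [N2 HN2] := powsmall' _ e20.
pose n := (maxn N1 N2).+1.
have : Lambda_n f n p by apply: Ap.
move=> [w [sw Aw]].
have Ip := Inv_atom _ _ Aw; rewrite sw in Ip.
have [[k Hk] [c1 c2]] := Ip (e / 2) e20.
have b1 : mu ^+ n <= mu ^+ N1.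
  apply: powmono; first by apply/andP; split; [exact: ltW mu0|exact: ltW mu1].
  by rewrite /n leqW // leq_maxl.
have b2 : lam ^+ n < e / 2.
  by apply: HN2; rewrite /n leqW // leq_maxr.
exists (gs k); split; first by exists k.
rewrite /close /gs /= subr0; split; first lra.
rewrite ltr_norml; apply/andP; split; lra.
Qed.

Lemma minl (x y : R) : Num.min x y <= x. Proof. by rewrite ge_min lexx. Qed.
Lemma minr' (x y : R) : Num.min x y <= y. Proof. by rewrite ge_min lexx orbT. Qed.
Lemma minpos (x y : R) : 0 < x -> 0 < y -> 0 < Num.min x y.
Proof. by move=> a b; rewrite lt_min a b. Qed.

Lemma lmu' : lam < mu.
Proof. have := mu2; have := mu0; have := mu1; rewrite expr2 => *; nra. Qed.

Lemma lpow j : 0 < lam ^+ j. Proof. by apply: exprn_gt0; exact: l0. Qed.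
Lemma lpow1 j : lam ^+ j <= 1.
Proof. by apply: exprn_ile1; [exact: ltW l0|exact: ltW l1]. Qed.

Lemma Hj j u v : 0 < u -> u <= lam ^+ j -> 0 <= v -> lam * v < u ^+ 2 -> v <= 1 ->
  atom f (nseq j P1) (u, v).
Proof.
have lp := l0; have lq := l1.
elim: j u v => [|j IH] u v hu hu' hv hv1 hv2.
  by rewrite expr0 in hu'; split => /=; apply/andP; split => //; lra.
have ln0 : lam != 0 by rewrite gt_eqF.
apply: subset_closure.
pose U := u / lam; pose V := v / lam.
have uU : u = lam * U by rewrite /U mulrC divfK.
have vV : v = lam * V by rewrite /V mulrC divfK.
have pj := lpow j; have pj1 := lpow1 j.
rewrite exprS in hu'.
rewrite uU vV in hu hu' hv hv1 hv2.
rewrite expr2 in hv1.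
have U0 : 0 < U by nra.
have U1 : U <= lam ^+ j by nra.
have V0 : 0 <= V by nra.
have VU : V < U * U by nra.
exists (U, V); first split.
- apply: IH => //; rewrite ?expr2; nra.
- split; last by rewrite /= expr2.
  split; apply/andP; split => /=; nra.
- by rewrite h1 /f1 /= -?uU -?vV //; split; [split; apply/andP; split => /=; nra | rewrite /= expr2].
Qed.

Lemma Z j : atom f (nseq j.+1 P1) (0, 0).
Proof.
have lp := l0; have lq := l1.
apply/closureP2 => e e0.
pose t := Num.min (lam ^+ j) (e / 2).
have t0 : 0 < t by apply: minpos; [exact: lpow|lra].
have t1 : t <= lam ^+ j := minl _ _.
have t2 : t <= e / 2 := minr' _ _.
have pj1 := lpow1 j.
have Xq : X1 (t, 0).
  split; last by rewrite /= expr2; nra.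
  split; apply/andP; split => /=; lra.
exists (f (t, 0)); split.
  exists (t, 0) => //; split => //; apply: Hj => //; rewrite ?mulr0 ?expr2; nra.
rewrite h1 // /f1 /close /= mulr0 subr0 sub0r normrN normr0 ger0_norm; last nra.
split; nra.
Qed.

Lemma OneP j : atom f (P2 :: nseq j P1) (1, 0).
Proof.
have lp := l0; have lq := l1; have m0 := mu0; have m1 := mu1; have lm := lmu'.
apply/closureP2 => e e0.
pose s := Num.min (lam ^+ j) (e / 2).
have s0 : 0 < s by apply: minpos; [exact: lpow|lra].
have s1 : s <= lam ^+ j := minl _ _.
have s2 : s <= e / 2 := minr' _ _.
have pj1 := lpow1 j.
pose t := mu * s.
have t0 : 0 < t by rewrite /t; nra.
have ts' : t < s by rewrite /t; nra.
have ts : t <= s by lra.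
have X2q : X2 (t, t * s).
  split; last by rewrite /= expr2; nra.
  split; apply/andP; split => /=; nra.
exists (f (t, t * s)); split.
  exists (t, t * s) => //; split => //; apply: Hj => //; rewrite ?expr2 /t; try nra.
  have h := mulr_gt0 (mulr_gt0 m0 s0) s0.
  have h' : 0 < mu - lam by lra.
  have := mulr_gt0 h' h; lra.
rewrite h2 // /f2 /close /=.
have -> : 1 - (1 - lam * t) = lam * t by ring.
have tss : t * s <= s by nra.
have tsp : 0 < t * s by apply: mulr_gt0.
rewrite sub0r normrN !ger0_norm; [split; nra|nra|nra].
Qed.

Lemma PowP i j : atom f (nseq i P1 ++ P2 :: nseq j P1) (lam ^+ i, 0).
Proof.
have lp := l0; have lq := l1.
elim: i => [|i IH]; first by rewrite expr0; exact: OneP.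
apply: subset_closure.
have pi := lpow i; have pi1 := lpow1 i.
exists (lam ^+ i, 0).
  split => //; split; last by rewrite /= expr2; nra.
  split; apply/andP; split => /=; lra.
rewrite h1 /f1 /= ?mulr0 ?exprS //.
split; last by rewrite /= expr2; nra.
split; apply/andP; split => /=; lra.
Qed.

Lemma attr_sup p : closure (range gs) p -> attractor f p.
Proof.
move=> /Sdesc [->|[m ->]] n /= n1.
  case: n n1 => [//|n] _.
  by exists (nseq n.+1 P1); rewrite size_nseq; split => //; exact: Z.
have [mn|nm] := ltnP m n.
  exists (nseq m P1 ++ P2 :: nseq (n - m.+1) P1); split; last exact: PowP.
  by rewrite size_cat /= !size_nseq addnS -addSn subnKC.
exists (nseq n P1); rewrite size_nseq; split => //.
have lp := l0.
apply: Hj => //; [exact: lpow| |by rewrite mulr0 expr2; have := lpow m; nra].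
by apply: powmono => //; apply/andP; split; [exact: ltW l0|exact: ltW l1].
Qed.

Definition stepb (b : bool) (x : R) := if b then lam * x else 1 - lam * x.
Definition aff (w : seq bool) (x : R) := foldr stepb x w.
Definition unstep (b : bool) (v : R) := if b then v / lam else (1 - v) / lam.
Definition inv_aff (w : seq bool) (v : R) := foldl (fun v b => unstep b v) v w.

Lemma unstepK b y : unstep b (stepb b y) = y.
Proof.
have ln0 : lam != 0 by rewrite gt_eqF // l0.
by case: b; rewrite /unstep /stepb; field.
Qed.

Lemma inv_affK w x : inv_aff w (aff w x) = x.
Proof.
elim: w => //= b w IH.
by rewrite /inv_aff /= unstepK; exact: IH.
Qed.

Lemma orbit p0 n : (forall k, (k < n)%N -> good (iter k f p0)) ->
  exists w : seq bool, size w = n /\ iter n f p0 = (aff w p0.1, lam ^+ n * p0.2).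
Proof.
elim: n => [|n IH] H.
  by exists [::]; case: p0 H => a b _ /=; rewrite expr0 mul1r.
have [w [sw E]] := IH (fun k kn => H k (leqW kn)).
have g := H n (ltnSn n).
rewrite iterS E; rewrite E in g.
case: g => X.
  exists (true :: w); rewrite h1 // /f1 /= sw exprS mulrA; split => //.
exists (false :: w); rewrite h2 // /f2 /= sw exprS mulrA; split => //.
Qed.

Lemma Xsq_iter p0 n : Xsq p0 -> Xsq (iter n f p0).
Proof. by move=> X; elim: n => // n IH; rewrite iterS; apply: hX. Qed.

Lemma exist_pt : exists a : R, 0 <= a <= 1 /\ Xtilde f (a, 1).
Proof.
have [a [a01 na]] := @not_covered R (fun w => inv_aff w (Num.sqrt (lam ^+ size w))).
have X0 : Xsq (a, 1).
  by split => //=; rewrite lexx ler01.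
exists a; split => //; split => // n.
apply/goodE; apply: contrapT => ng.
have ex : exists n, ~~ `[< good (iter n f (a, 1)) >] by exists n; apply/asboolPn.
case: (ex_minnP ex) => m /asboolPn nm minm.
have [w [sw E]] : exists w : seq bool, size w = m /\ iter m f (a, 1) = (aff w a, lam ^+ m * 1).
  apply: orbit => k km; apply: contrapT => nk.
  have := minm k (introT (@asboolPn _) nk); rewrite leqNgt km //.
have Xm := Xsq_iter _ m X0.
rewrite E in Xm nm.
have [/andP[q0 q1] _] := Xsq01 Xm.
have e1 : ~ (lam ^+ m * 1 < aff w a ^+ 2) by move=> h; apply: nm; left; split.
have e2 : ~ (lam ^+ m * 1 > aff w a ^+ 2) by move=> h; apply: nm; right; split.
have eq : aff w a ^+ 2 = lam ^+ m.
  apply/eqP; rewrite eq_le !leNgt -(mulr1 (lam ^+ m)).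
  by apply/andP; split; apply/negP.
apply: (na w) => /=.
by rewrite sw -eq sqrtr_sqr ger0_norm // inv_affK.
Qed.

Lemma B1 x N : Xtilde f x -> x.2 = 1 -> exists t, (N <= t)%N /\ X2 (iter t f x).
Proof.
move=> Xx x2; apply: contrapT => H.
have allX1 : forall t, (N <= t)%N -> X1 (iter t f x).
  move=> t Nt; case: (Xt_good t Xx) => // X2t.
  by exfalso; apply: H; exists t.
have E : forall j, (iter (N + j) f x).1 = lam ^+ j * (iter N f x).1.
  elim => [|j IH]; first by rewrite addn0 expr0 mul1r.
  rewrite addnS iterS h1; last by apply: allX1; rewrite leq_addr.
  by rewrite /f1 /= IH exprS mulrA.
have [_] := allX1 (N + N)%N (leq_addr _ _).
rewrite E Xt_y // x2 mulr1 exprD.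
have [/andP[a b] _] := Xsq01 (goodX (Xt_good N Xx)).
have L0 := lpow N.
rewrite expr2 => h.
have xx : (iter N f x).1 * (iter N f x).1 <= 1 by nra.
have LL : 0 < lam ^+ N * lam ^+ N by apply: mulr_gt0.
have := ler_wpM2l (ltW LL) xx.
lra.
Qed.

Lemma B3 x : Xtilde f x -> x.2 = 1 -> omega f x (0, 0).
Proof.
move=> Xx x2; apply/omegaP => e e0 M.
have [N1 HN1] := powsmall' _ (mulr_gt0 e0 e0).
have [N2 HN2] := powsmall' _ e0.
have [t [Nt X2t]] := B1 _ (maxn M (maxn N1 N2)) Xx x2.
exists t; split; first by apply: leq_trans Nt; apply: leq_maxl.
have yt : (iter t f x).2 = lam ^+ t by rewrite Xt_y // x2 mulr1.
have b1 : lam ^+ t < e * e.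
  by apply: HN1; apply: leq_trans Nt; rewrite leq_max leq_max leqnn orbT.
have b2 : lam ^+ t < e.
  by apply: HN2; apply: leq_trans Nt; rewrite !leq_max leqnn !orbT.
have [/andP[a _] _] := Xsq01 X2t.1.
have := X2t.2; rewrite /= yt expr2 => h.
rewrite /close /= !subr0 yt !ger0_norm //; last exact: ltW (lpow t).
split; nra.
Qed.

Lemma B2 x m : Xtilde f x -> x.2 = 1 -> omega f x (gs m).
Proof.
move=> Xx x2; apply/omegaP => e e0 M.
have lp := l0; have lq := l1.
have [N1 HN1] := powsmall' _ (mulr_gt0 e0 e0).
have [N2 HN2] := powsmall' _ e0.
have c0 : 0 < lam ^+ m * (1 - lam) ^+ 2.
  by apply: mulr_gt0; [exact: lpow|apply: exprn_gt0; lra].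
have [N3 HN3] := powsmall' _ c0.
have [t [Nt X2t]] := B1 _ (maxn M (maxn N1 (maxn N2 N3))) Xx x2.
have hM : (M <= t)%N by apply: leq_trans Nt; rewrite leq_max leqnn.
have h1t : (N1 <= t)%N by apply: leq_trans Nt; rewrite !leq_max leqnn !orbT.
have h2t : (N2 <= t)%N by apply: leq_trans Nt; rewrite !leq_max leqnn !orbT.
have h3t : (N3 <= t)%N by apply: leq_trans Nt; rewrite !leq_max leqnn !orbT.
have yt : (iter t f x).2 = lam ^+ t by rewrite Xt_y // x2 mulr1.
set xt := (iter t f x).1.
have [/andP[a _] _] := Xsq01 X2t.1.
have hx : xt * xt < lam ^+ t by have := X2t.2; rewrite /= yt expr2.
have b1 : lam ^+ t < e * e by apply: HN1.
have pt1 := lpow1 t.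
have xe : xt < e by nra.
have x1 : xt < 1 by nra.
have b3 : lam ^+ t.+1 < lam ^+ m * (1 - lam) ^+ 2 by apply: HN3; apply: leqW.
have claim : forall i, (i <= m)%N ->
    iter (t.+1 + i) f x = (lam ^+ i * (1 - lam * xt), lam ^+ (t.+1 + i)).
  elim => [|i IH] hi.
    by rewrite addn0 iterS h2 // /f2 /= yt expr0 mul1r exprS.
  have IH' := IH (ltnW hi).
  rewrite addnS iterS IH'.
  have g := Xt_good (t.+1 + i) Xx; rewrite IH' in g.
  case: g => X.
    by rewrite h1 // /f1 /= !exprS mulrA.
  exfalso; move: X => [_ /=]; rewrite exprD.
  have B0 := lpow i.
  have CB : lam ^+ m <= lam ^+ i.
    by apply: powmono; [apply/andP; split; lra|exact: ltnW].
  have K0 : 1 - lam <= 1 - lam * xt by nra.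
  have K2 : (1 - lam) ^+ 2 <= (1 - lam * xt) ^+ 2.
    by rewrite !expr2; nra.
  have C2 : lam ^+ m * (1 - lam) ^+ 2 <= lam ^+ i * (1 - lam * xt) ^+ 2.
    apply: ler_pM => //; first exact: ltW (lpow m).
    by rewrite expr2; nra.
  move: b3 C2 B0 K2; rewrite !expr2.
  set A := lam ^+ t.+1; set B := lam ^+ i; set C := lam ^+ m; set K := 1 - lam * xt.
  move=> b3' C2' B0' K2' bb.
  have h : A < B * (K * K) by lra.
  have : B * A < B * (B * (K * K)) by rewrite ltr_pM2l.
  lra.
exists (t.+1 + m)%N; split; first by apply: leq_trans hM _; rewrite addSn leqW // leq_addr.
rewrite claim // /close /gs /=.
have -> : lam ^+ m * (1 - lam * xt) - lam ^+ m = - (lam ^+ m * lam * xt) by ring.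
have pm1 := lpow1 m; have pm := lpow m.
have pl : 0 <= lam ^+ m * lam by apply: mulr_ge0; lra.
have pl1 : lam ^+ m * lam <= 1 by nra.
have hh : lam ^+ m * lam * xt <= xt by rewrite ler_piMl.
rewrite normrN subr0 !ger0_norm; [|exact: ltW (lpow _)|exact: mulr_ge0].
split; first lra.
by apply: HN2; apply: leq_trans h2t _; rewrite addSnnS leq_addr.
Qed.

Lemma omega_pt x : Xtilde f x -> x.2 = 1 -> omega f x = closure (range gs).
Proof.
move=> Xx x2; apply/seteqP; split => p.
  exact: partA.
by move/Sdesc => [->|[m ->]]; [exact: B3|exact: B2].
Qed.

Lemma main_dyn : limset f = closure (range gs) /\ attractor f = closure (range gs) /\
  transitive_set f (attractor f).
Proof.
have [a [a01 Xa]] := exist_pt.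
have om := omega_pt _ Xa erefl.
have attrE : attractor f = closure (range gs).
  by apply/seteqP; split => p; [exact: attr_sub|exact: attr_sup].
have cS : closure (range gs) = closure (closure (range gs)).
  by apply/closure_id; exact: closed_closure.
split.
  apply/seteqP; split.
    move=> p Hp; rewrite cS; apply: closureS Hp => q [y Xy oq]; exact: partA _ _ Xy oq.
  by move=> p Sp; apply: subset_closure; exists (a, 1) => //; rewrite om.
split; first exact: attrE.
split; last by exists (a, 1); split => //; rewrite om attrE.
rewrite attrE.
apply: (@subclosed_compact _ _ (`[(0:R), 1] `*` `[(0:R), 1])).
- exact: closed_closure.
- exact (compact_setX (@segment_compact R 0 1) (@segment_compact R 0 1)).
have lp := l0.
move=> p /Sdesc [->|[m ->]]; split => /=; rewrite in_itv /= ?lexx ?ler01 //.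
by rewrite (ltW (lpow m)) lpow1.
Qed.
End Dyn.

Theorem proposition2 (R : realType) (lam : R) (f : R * R -> R * R) :
  0 < lam < 1 ->
  (forall p, Xsq p -> Xsq (f p)) ->
  (forall p, X1 p -> f p = f1 lam p) ->
  (forall p, X2 p -> f p = f2 lam p) ->
  limset f = closure (range (fun n : nat => ((lam ^+ n : R), (0 : R)) : R * R)) /\
  attractor f = closure (range (fun n : nat => ((lam ^+ n : R), (0 : R)) : R * R)) /\
  transitive_set f (attractor f).
Proof.
move=> hl hX h1 h2.
exact (@main_dyn R lam f hl hX h1 h2).
Qed.
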